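(* Let $\zeta=e^{-2\pi i/4}=-i$, and let $\Gamma$ be the group generated by the linear operators $L_1,L_{-1}$ on $\mathbb{C}^2$ (basis $(e_{-1},e_1)$) given by $L_1(e_{-1})=e_{-1}-\zeta e_1$, $L_1(e_1)=-\zeta e_1$, $L_{-1}(e_1)=e_1-e_{-1}$, $L_{-1}(e_{-1})=-\zeta e_{-1}$. Then the natural action of $\Gamma$ on $\mathbb{C}^2$, viewed as a real representation on $\mathbb{R}^4$, is irreducible over $\mathbb{R}$.
   Context: This is the case $d=2$, $\alpha=\frac14$ of the operators $L_p$ ($p\in\{-1,1\}$), which preserve the positive definite hermitian form $Q_{1/4}$. *)

(* Defs.v *)
From HB Require Import structures.
From mathcomp Require Import all_boot all_order all_algebra.
From mathcomp Require Import complex.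
From mathcomp Require Import reals.
Set Implicit Arguments. Unset Strict Implicit. Unset Printing Implicit Defensive.
Import Order.TTheory GRing.Theory Num.Theory.
Local Open Scope ring_scope.
Local Open Scope complex_scope.

Section Defs.
Variable R : realType.

Definition zeta : R[i] := - 'i.

Definition e_m1 : 'cV[R[i]]_2 := delta_mx 0 0.
Definition e_1  : 'cV[R[i]]_2 := delta_mx 1 0.

(* matrices acting on column vectors; column j is the image of the j-th basis vector *)
Definition L_1 : 'M[R[i]]_2 := row_mx (e_m1 - zeta *: e_1) (- zeta *: e_1).
Definition L_m1 : 'M[R[i]]_2 := row_mx (- zeta *: e_m1) (e_1 - e_m1).

Inductive in_Gamma : 'M[R[i]]_2 -> Prop :=
  | Gamma_one : in_Gamma 1%:M
  | Gamma_L1 : in_Gamma L_1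
  | Gamma_Lm1 : in_Gamma L_m1
  | Gamma_inv g : in_Gamma g -> in_Gamma (invmx g)
  | Gamma_mul g h : in_Gamma g -> in_Gamma h -> in_Gamma (g *m h).

Definition real_subspace (S : 'cV[R[i]]_2 -> Prop) : Prop :=
  [/\ S 0,
      (forall u v, S u -> S v -> S (u + v)) &
      (forall (r : R) v, S v -> S (r%:C *: v))].

Definition Gamma_invariant (S : 'cV[R[i]]_2 -> Prop) : Prop :=
  forall g v, in_Gamma g -> S v -> S (g *m v).

Definition real_irreducible : Prop :=
  forall S, real_subspace S -> Gamma_invariant S ->
    (forall v, S v -> v = 0) \/ (forall v, S v).
End Defs.

(* Main.v *)
Require Import Defs.
From HB Require Import structures.
From mathcomp Require Import all_boot all_order all_algebra complex reals.
From mathcomp Require Import ring.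
From Stdlib Require Import Classical_Prop.
Set Implicit Arguments. Unset Strict Implicit. Unset Printing Implicit Defensive.
Import Order.TTheory GRing.Theory Num.Theory.
Local Open Scope ring_scope.
Local Open Scope complex_scope.

Definition colv (R : realType) (a b : R[i]) : 'cV[R[i]]_2 :=
  \col_(k < 2) (if k == 0 then a else b).

Lemma colvE (R : realType) (v : 'cV[R[i]]_2) : v = colv (v 0 0) (v 1 0).
Proof.
apply/matrixP => k l; rewrite !mxE (ord1 l).
by case: k => [[|[|//]] Hk] /=; congr (v _ _); apply: val_inj.
Qed.

Lemma split0 : @split 1 1 ord0 = inl ord0.
Proof. have -> : (ord0 : 'I_(1+1)) = unsplit (inl ord0) by apply: val_inj.
exact: unsplitK. Qed.
Lemma split1 : @split 1 1 (lift ord0 ord0) = inr ord0.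
Proof. have -> : (lift ord0 ord0 : 'I_(1+1)) = unsplit (inr ord0) by apply: val_inj.
exact: unsplitK. Qed.

Lemma L1_colv (R : realType) (a b : R[i]) :
  L_1 R *m colv a b = colv a ('i * (a + b)).
Proof.
apply/matrixP => k l; rewrite !mxE big_ord_recl big_ord1 !mxE /=.
case: k => [[|[|//]] Hk] /=; rewrite /L_1 /e_m1 /e_1 /zeta ?mxE split0 split1 ?mxE /=; ring.
Qed.

Lemma Lm1_colv (R : realType) (a b : R[i]) :
  L_m1 R *m colv a b = colv ('i * a - b) b.
Proof.
apply/matrixP => k l; rewrite !mxE big_ord_recl big_ord1 !mxE /=.
case: k => [[|[|//]] Hk] /=; rewrite /L_m1 /e_m1 /e_1 /zeta ?mxE split0 split1 ?mxE /=; ring.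
Qed.

Lemma colvD (R : realType) (a b c d : R[i]) : colv a b + colv c d = colv (a + c) (b + d).
Proof. by apply/matrixP => k l; rewrite !mxE; case: ifP. Qed.
Lemma colvZ (R : realType) (r : R) (a b : R[i]) : r%:C *: colv a b = colv (r%:C * a) (r%:C * b).
Proof. by apply/matrixP => k l; rewrite !mxE; case: ifP. Qed.
Lemma colv0 (R : realType) : colv 0 0 = 0 :> 'cV[R[i]]_2.
Proof. by apply/matrixP => k l; rewrite !mxE; case: ifP. Qed.
Lemma ii (R : realType) : 'i%C * 'i%C = -1 :> R[i].
Proof. by rewrite -expr2 sqr_i. Qed.

Lemma cdecomp (R : realType) (x y : R) : (x +i* y) = x%:C + y%:C * 'i%C :> R[i].
Proof. apply/eqP; rewrite eq_complex /=; apply/andP; split; apply/eqP; ring. Qed.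

Lemma Tcg (R : realType) (S : 'cV[R[i]]_2 -> Prop) a b a' b' :
  S (colv a b) -> a = a' -> b = b' -> S (colv a' b').
Proof. by move=> H <- <-. Qed.

Lemma TD (R : realType) (S : 'cV[R[i]]_2 -> Prop) a b c d :
  real_subspace S -> S (colv a b) -> S (colv c d) -> S (colv (a + c) (b + d)).
Proof. by case=> _ hD _ h1 h2; rewrite -colvD; apply: hD. Qed.

Lemma TZ (R : realType) (S : 'cV[R[i]]_2 -> Prop) (r : R) a b :
  real_subspace S -> S (colv a b) -> S (colv (r%:C * a) (r%:C * b)).
Proof. by case=> _ _ hZ h1; rewrite -colvZ; apply: hZ. Qed.

Lemma TF (R : realType) (S : 'cV[R[i]]_2 -> Prop) a b :
  Gamma_invariant S -> S (colv a b) -> S (colv a ('i%C * (a + b))).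
Proof. by move=> hG h; rewrite -L1_colv; apply: hG => //; constructor. Qed.

Lemma TG (R : realType) (S : 'cV[R[i]]_2 -> Prop) a b :
  Gamma_invariant S -> S (colv a b) -> S (colv ('i%C * a - b) b).
Proof. by move=> hG h; rewrite -Lm1_colv; apply: hG => //; constructor. Qed.

Lemma TN (R : realType) (S : 'cV[R[i]]_2 -> Prop) a b :
  real_subspace S -> S (colv a b) -> S (colv (- a) (- b)).
Proof.
move=> hS h; apply: Tcg (TZ (-1) hS h) _ _; by rewrite rmorphN1 mulN1r.
Qed.

Lemma full (R : realType) (S : 'cV[R[i]]_2 -> Prop) c :
  real_subspace S -> Gamma_invariant S -> c != 0 -> S (colv c 0) -> forall v, S v.
Proof.
move=> hS hG c0 h0.
have h1 : S (colv ('i%C * c) 0) by apply: Tcg (TG hG h0) _ _; rewrite ?subr0.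
have h2 : S (colv 0 ('i%C * c)).
  by apply: Tcg (TD hS (TF hG h0) (TN hS h0)) _ _; rewrite ?subrr ?oppr0 ?addr0.
have h3 : S (colv 0 c).
  apply: Tcg (TN hS (TF hG h2)) _ _; first by rewrite oppr0.
  by rewrite add0r mulrA ii mulN1r opprK.
have hx : forall z, S (colv (z * c) 0).
  case=> x y; rewrite cdecomp.
  apply: Tcg (TD hS (TZ x hS h0) (TZ y hS h1)) _ _; ring.
have hy : forall z, S (colv 0 (z * c)).
  case=> x y; rewrite cdecomp.
  apply: Tcg (TD hS (TZ x hS h3) (TZ y hS h2)) _ _; ring.
move=> v; rewrite (colvE v).
apply: Tcg (TD hS (hx (v 0 0 / c)) (hy (v 1 0 / c))) _ _.
  by rewrite divfK // addr0.
by rewrite divfK // add0r.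
Qed.

Theorem mainTheorem15 (R : realType) : real_irreducible R.
Proof.
move=> S hS hG.
case: (Classical_Prop.classic (exists v, S v /\ v <> 0)); last first.
  move=> hn; left => v Sv; apply: Classical_Prop.NNPP => hv; apply: hn; by exists v.
case=> v [Sv v0]; right.
move: Sv; rewrite (colvE v); set a := v 0 0; set b := v 1 0 => Sv.
set c := 'i%C * (a + b) - b.
set d := 'i%C * a - b - a.
have hc : S (colv 0 c).
  by apply: Tcg (TD hS (TF hG Sv) (TN hS Sv)) _ _; rewrite ?subrr.
have hd : S (colv d 0).
  by apply: Tcg (TD hS (TG hG Sv) (TN hS Sv)) _ _; rewrite ?subrr.
have [c0|cn0] := eqVneq c 0; last first.
  apply: (@full R S (- c)) => //; first by rewrite oppr_eq0.
  apply: Tcg (TD hS (TG hG hc) (TN hS hc)) _ _; by rewrite ?subrr ?mulr0 ?sub0r ?oppr0 ?addr0.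
have [d0|dn0] := eqVneq d 0; last by apply: (@full R S d).
exfalso; apply: v0.
have ha : 'i%C * a = 0.
  have e : c + ('i%C - 1) * d + 'i%C * a = ('i%C * 'i%C + 1) * a by rewrite /c /d; ring.
  by move: e; rewrite c0 d0 ii addNr mul0r mulr0 !add0r.
have a0 : a = 0 by move/eqP: ha; rewrite mulf_eq0 => /orP [/eqP h|/eqP //]; move: h => /eqP; rewrite eq_complex /= oner_eq0 andbF.
have b0 : b = 0 by move: d0; rewrite /d a0 mulr0 sub0r subr0 => /eqP; rewrite oppr_eq0 => /eqP.
by rewrite (colvE v) -/a -/b a0 b0 colv0.
Qed.
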